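(* Let $\lambda_1,\lambda_2$ be as in the context, $K\in(-1,1)$ with $K\neq0$, let $b$ solve $b'(v)=\sqrt{\lambda_1^2-K(\lambda_1^2\cos^2 b(v)+\lambda_2^2\sin^2 b(v))}$, $b(0)=0$, and let $W>0$ be the unique positive real number with $b(W)=\pi$. Let $x_3$ be the solution of $x_3'(v)=\dfrac{\lambda_1\lambda_2K}{\lambda_1+b'(v)}$ with $x_3(0)=0$. Then: (1) $x_3$ is a well-defined bijection from $\mathbb{R}$ to $\mathbb{R}$; (2) $x_3$ is odd; (3) $x_3(v+W)=x_3(v)+x_3(W)$ for all $v\in\mathbb{R}$.
   Context: Either $\lambda_1>\lambda_2>0$ or $\lambda_1=\lambda_2=1$. (The solution $b$ exists on $\mathbb{R}$ and is an increasing bijection of $\mathbb{R}$, so $W$ is well defined.) *)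

(* Defs.v *)
From Stdlib Require Import Reals.
Open Scope R_scope.

Definition bprime (l1 l2 K y : R) : R :=
  sqrt (l1 ^ 2 - K * (l1 ^ 2 * (cos y) ^ 2 + l2 ^ 2 * (sin y) ^ 2)).

Definition x3prime (l1 l2 K : R) (b : R -> R) (v : R) : R :=
  l1 * l2 * K / (l1 + bprime l1 l2 K (b v)).

Definition is_x3 (l1 l2 K : R) (b x3 : R -> R) : Prop :=
  x3 0 = 0 /\ forall v, derivable_pt_lim x3 v (x3prime l1 l2 K b v).

(* Main.v *)
Require Import Defs.
From Stdlib Require Import Reals Lra Psatz.
From Coquelicot Require Import Coquelicot.
Open Scope R_scope.

Lemma antideriv (h : R -> R) : (forall x, continuity_pt h x) ->
  exists H : R -> R, H 0 = 0 /\ forall x, derivable_pt_lim H x (h x).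
Proof.
  intros Hc.
  assert (Hc' : forall x, continuous h x).
  { intros x. apply continuity_pt_filterlim. apply Hc. }
  exists (fun x => RInt h 0 x). split.
  - apply (RInt_point (V:=R_CompleteNormedModule)).
  - intros x. apply is_derive_Reals. apply (is_derive_RInt (V:=R_NormedModule) _ _ 0).
    + apply filter_forall. intros y. apply (RInt_correct (V:=R_CompleteNormedModule)).
      apply ex_RInt_continuous. intros; apply Hc'.
    + apply Hc'.
Qed.

Lemma mvt_lim (f f' : R -> R) a b : (forall x, derivable_pt_lim f x (f' x)) -> a < b ->
  exists c, a < c < b /\ f b - f a = f' c * (b - a).
Proof.
  intros Hd Hab.
  pose (pr := fun x => exist (fun l => derivable_pt_lim f x l) (f' x) (Hd x) : derivable_pt f x).
  destruct (MVT_cor1 f a b pr Hab) as [c [E Hc]].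
  exists c; split; [exact Hc|]. rewrite E. rewrite (derive_pt_eq_0 f c (f' c) (pr c) (Hd c)). reflexivity.
Qed.

Lemma deriv0_const (f : R -> R) : (forall x, derivable_pt_lim f x 0) -> forall x, f x = f 0.
Proof.
  intros Hd x. destruct (Rtotal_order x 0) as [H|[H|H]].
  - destruct (mvt_lim f (fun _ => 0) x 0 Hd H) as [c [_ E]]. lra.
  - subst; reflexivity.
  - destruct (mvt_lim f (fun _ => 0) 0 x Hd H) as [c [_ E]]. lra.
Qed.

Lemma deriv_incr (f f' : R -> R) : (forall x, derivable_pt_lim f x (f' x)) ->
  (forall x, 0 < f' x) -> forall a b, a < b -> f a < f b.
Proof.
  intros Hd Hp a b Hab. destruct (mvt_lim f f' a b Hd Hab) as [c [_ E]].
  specialize (Hp c). nra.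
Qed.

Lemma deriv_inj (f f' : R -> R) : (forall x, derivable_pt_lim f x (f' x)) ->
  (forall x, 0 < f' x) -> forall a b, f a = f b -> a = b.
Proof.
  intros Hd Hp a b E. destruct (Rtotal_order a b) as [H|[H|H]]; auto.
  - pose proof (deriv_incr f f' Hd Hp a b H); lra.
  - pose proof (deriv_incr f f' Hd Hp b a H); lra.
Qed.

Lemma deriv_bij (f f' : R -> R) m : (forall x, derivable_pt_lim f x (f' x)) ->
  0 < m -> (forall x, m <= f' x) ->
  (forall u v, f u = f v -> u = v) /\ (forall y, exists v, f v = y).
Proof.
  intros Hd Hm Hb. split.
  - apply (deriv_inj f f' Hd). intros x; specialize (Hb x); lra.
  - intros y. set (T := (Rabs (y - f 0) + 1) / m).
    assert (HT : 0 < T). { unfold T. apply Rdiv_lt_0_compat; [|lra]. pose proof (Rabs_pos (y - f 0)); lra. }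
    assert (HmT : m * T = Rabs (y - f 0) + 1). { unfold T; field; lra. }
    destruct (mvt_lim f f' 0 T Hd HT) as [c1 [_ E1]].
    assert (HT' : -T < 0) by lra.
    destruct (mvt_lim f f' (-T) 0 Hd HT') as [c2 [_ E2]].
    pose proof (Hb c1); pose proof (Hb c2).
    pose proof (Rle_abs (y - f 0)). pose proof (Rabs_minus_sym y (f 0)). pose proof (Rle_abs (f 0 - y)).
    assert (A1 : f T > y) by nra.
    assert (A2 : f (-T) < y) by nra.
    assert (Hc : continuity (fun x => f x - y)).
    { intros x. apply continuity_pt_minus. apply derivable_continuous_pt. exists (f' x). apply Hd.
      apply continuity_pt_const. intros a b; reflexivity. }
    destruct (IVT (fun x => f x - y) (-T) T Hc ltac:(lra) ltac:(lra) ltac:(lra)) as [z [_ Hz]].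
    exists z. lra.
Qed.

Lemma dlim_neg f f' : (forall x, derivable_pt_lim f x (f' x)) ->
  forall x, derivable_pt_lim (fun v => - f (- v)) x (f' (-x)).
Proof.
  intros Hd x.
  pose proof (derivable_pt_lim_opp id x 1 (derivable_pt_lim_id x)) as H1.
  pose proof (derivable_pt_lim_comp (- id)%F f x (-1) (f' (-x)) H1 (Hd _)) as H2.
  pose proof (derivable_pt_lim_opp _ _ _ H2) as H3.
  replace (f' (-x)) with (- (f' (-x) * -1)) by ring. exact H3.
Qed.

Lemma dlim_shift f f' a : (forall x, derivable_pt_lim f x (f' x)) ->
  forall x, derivable_pt_lim (fun v => f (v + a)) x (f' (x + a)).
Proof.
  intros Hd x.
  pose proof (derivable_pt_lim_plus id (fct_cte a) x 1 0 (derivable_pt_lim_id x) (derivable_pt_lim_const a x)) as H1.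
  pose proof (derivable_pt_lim_comp _ f x _ (f' (x + a)) H1 (Hd _)) as H2.
  replace (f' (x + a)) with (f' (x+a) * (1 + 0)) by ring. exact H2.
Qed.

Lemma dlim_comp f f' h h' : (forall x, derivable_pt_lim f x (f' x)) ->
  (forall x, derivable_pt_lim h x (h' x)) ->
  forall x, derivable_pt_lim (fun v => h (f v)) x (h' (f x) * f' x).
Proof.
  intros Hf Hh x. exact (derivable_pt_lim_comp f h x _ _ (Hf x) (Hh _)).
Qed.

Lemma dlim_minus f f' h h' : (forall x, derivable_pt_lim f x (f' x)) ->
  (forall x, derivable_pt_lim h x (h' x)) ->
  forall x, derivable_pt_lim (fun v => f v - h v) x (f' x - h' x).
Proof.
  intros Hf Hh x. exact (derivable_pt_lim_minus f h x _ _ (Hf x) (Hh x)).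
Qed.

Lemma dlim_plus f f' h h' : (forall x, derivable_pt_lim f x (f' x)) ->
  (forall x, derivable_pt_lim h x (h' x)) ->
  forall x, derivable_pt_lim (fun v => f v + h v) x (f' x + h' x).
Proof.
  intros Hf Hh x. exact (derivable_pt_lim_plus f h x _ _ (Hf x) (Hh x)).
Qed.

Lemma dlim_ext f l l' x : l = l' -> derivable_pt_lim f x l -> derivable_pt_lim f x l'.
Proof. intros ->; auto. Qed.

Section G.
Variables (l1 l2 K : R).
Hypothesis hl : (l1 > l2 /\ l2 > 0) \/ (l1 = 1 /\ l2 = 1).
Hypothesis hK : -1 < K < 1.

Lemma farg_pos y : 0 < l1 ^ 2 - K * (l1 ^ 2 * (cos y) ^ 2 + l2 ^ 2 * (sin y) ^ 2).
Proof.
  pose proof (sin2_cos2 y) as E. unfold Rsqr in E.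
  assert (Hl : 0 < l2 /\ l2 <= l1) by (destruct hl as [[? ?]|[-> ->]]; lra).
  destruct Hl as [Hl2 Hl12].
  assert (A : l2 ^ 2 <= l1 ^ 2) by nra.
  assert (C : 0 <= cos y ^ 2) by (apply pow2_ge_0).
  assert (S : 0 <= sin y ^ 2) by (apply pow2_ge_0).
  assert (T : l1 ^ 2 * cos y ^ 2 + l2 ^ 2 * sin y ^ 2 <= l1 ^ 2) by nra.
  assert (T0 : 0 <= l1 ^ 2 * cos y ^ 2 + l2 ^ 2 * sin y ^ 2) by nra.
  assert (P : 0 < l1 ^ 2) by nra.
  destruct (Rle_lt_dec K 0); nra.
Qed.

Lemma g_pos y : 0 < bprime l1 l2 K y.
Proof. unfold bprime. apply sqrt_lt_R0. apply farg_pos. Qed.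

Lemma g_even y : bprime l1 l2 K (- y) = bprime l1 l2 K y.
Proof. unfold bprime. rewrite cos_neg, sin_neg. f_equal. ring. Qed.

Lemma g_per y : bprime l1 l2 K (y + PI) = bprime l1 l2 K y.
Proof. unfold bprime. rewrite neg_cos, neg_sin. f_equal. ring. Qed.

Lemma g_bound y : bprime l1 l2 K y <= 1 + 2 * l1 ^ 2 + l2 ^ 2.
Proof.
  unfold bprime. set (a := l1 ^ 2 - _).
  assert (Ha : 0 < a) by apply farg_pos.
  assert (a <= 2 * l1 ^ 2 + l2 ^ 2).
  { unfold a. pose proof (sin2_cos2 y) as E. unfold Rsqr in E.
    assert (C : 0 <= cos y ^ 2) by (apply pow2_ge_0).
    assert (S : 0 <= sin y ^ 2) by (apply pow2_ge_0).
    assert (0 <= l1 ^ 2) by apply pow2_ge_0. assert (0 <= l2 ^ 2) by apply pow2_ge_0.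
    assert (T : l1 ^ 2 * cos y ^ 2 + l2 ^ 2 * sin y ^ 2 <= l1 ^ 2 + l2 ^ 2) by nra.
    assert (T0 : 0 <= l1 ^ 2 * cos y ^ 2 + l2 ^ 2 * sin y ^ 2) by nra.
    nra. }
  pose proof (sqrt_pos a). pose proof (sqrt_sqrt a ltac:(lra)). nra.
Qed.

Lemma g_cont y : continuity_pt (bprime l1 l2 K) y.
Proof.
  unfold bprime.
  set (F := fun y => l1 ^ 2 - K * (l1 ^ 2 * (cos y) ^ 2 + l2 ^ 2 * (sin y) ^ 2)).
  change (continuity_pt (comp sqrt F) y).
  apply continuity_pt_comp.
  - apply derivable_continuous_pt. unfold F. reg.
  - apply continuity_pt_sqrt. left; apply farg_pos.
Qed.
End G.

Theorem proposition4p3 (l1 l2 K : R) (b : R -> R) (W : R)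
  (hl : (l1 > l2 /\ l2 > 0) \/ (l1 = 1 /\ l2 = 1))
  (hK : -1 < K < 1) (hK0 : K <> 0)
  (hb0 : b 0 = 0)
  (hb : forall v, derivable_pt_lim b v (bprime l1 l2 K (b v)))
  (hW : W > 0) (hbW : b W = PI) :
  (exists x3 : R -> R, is_x3 l1 l2 K b x3) /\
  forall x3 : R -> R, is_x3 l1 l2 K b x3 ->
    ((forall u v, x3 u = x3 v -> u = v) /\ (forall y, exists v, x3 v = y)) /\
    (forall v, x3 (- v) = - x3 v) /\
    (forall v, x3 (v + W) = x3 v + x3 W).
Proof.
  set (g := bprime l1 l2 K).
  assert (gpos : forall y, 0 < g y) by (intros; apply g_pos; auto).
  assert (Hl1 : 0 < l1) by (destruct hl as [[? ?]|[-> ->]]; lra).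
  destruct (antideriv (fun y => / g y)) as [G [HG0 HG]].
  { intros y. change (continuity_pt (/ g)%F y). apply continuity_pt_inv.
    apply g_cont; auto. apply Rgt_not_eq, gpos. }
  assert (Gsol : forall c, c 0 = 0 -> (forall v, derivable_pt_lim c v (g (c v))) ->
            forall v, G (c v) = v).
  { intros c Hc0 Hc v.
    assert (D : forall x, derivable_pt_lim (fun v => G (c v) - v) x 0).
    { intros x. apply (dlim_ext _ (/ g (c x) * g (c x) - 1)).
      field. apply Rgt_not_eq, gpos.
      apply (dlim_minus (fun v => G (c v)) (fun x => / g (c x) * g (c x)) id (fun _ => 1)).
      - apply (dlim_comp c (fun x => g (c x)) G (fun y => / g y)); auto.
      - intros; apply derivable_pt_lim_id. }
    pose proof (deriv0_const _ D v) as E. simpl in E. rewrite Hc0, HG0 in E. lra. }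
  assert (Ginj : forall a b, G a = G b -> a = b).
  { apply (deriv_inj G (fun y => / g y) HG). intros; apply Rinv_0_lt_compat, gpos. }
  assert (uniq : forall c, c 0 = 0 -> (forall v, derivable_pt_lim c v (g (c v))) ->
            forall v, c v = b v).
  { intros c Hc0 Hc v. apply Ginj. rewrite (Gsol c Hc0 Hc), (Gsol b hb0 hb). reflexivity. }
  assert (bodd : forall v, b (- v) = - b v).
  { intros v.
    assert (E : (fun v => - b (- v)) v = b v).
    { apply (uniq (fun v => - b (- v))).
      - simpl. rewrite Ropp_0, hb0. ring.
      - intros x. apply (dlim_ext _ (g (b (- x)))).
        + unfold g; cbv beta. rewrite (g_even l1 l2 K (b (- x))). reflexivity.
        + apply (dlim_neg b (fun v => g (b v)) hb). }
    simpl in E. lra. }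
  assert (bper : forall v, b (v + W) = b v + PI).
  { intros v.
    assert (E : (fun v => b (v + W) - PI) v = b v).
    { apply (uniq (fun v => b (v + W) - PI)).
      - simpl. rewrite Rplus_0_l, hbW. ring.
      - intros x. apply (dlim_ext _ (g (b (x + W)) - 0)).
        + unfold g; cbv beta. rewrite <- (g_per l1 l2 K (b (x + W) - PI)). replace (b (x + W) - PI + PI) with (b (x + W)) by ring. ring.
        + apply (dlim_minus (fun v => b (v + W)) (fun x => g (b (x + W))) (fun _ => PI) (fun _ => 0)).
          * apply (dlim_shift b (fun v => g (b v))); auto.
          * intros; apply derivable_pt_lim_const. }
    simpl in E. lra. }
  assert (x3eq : forall v, x3prime l1 l2 K b v = l1 * l2 * K / (l1 + g (b v))) by reflexivity.
  split.
  - destruct (antideriv (x3prime l1 l2 K b)) as [X [HX0 HX]].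
    + intros v. change (continuity_pt (fct_cte (l1 * l2 * K) / (fct_cte l1 + comp g b))%F v).
      apply continuity_pt_div.
      * apply continuity_pt_const. intros a c; reflexivity.
      * apply continuity_pt_plus. apply continuity_pt_const. intros a c; reflexivity.
        apply continuity_pt_comp. apply derivable_continuous_pt. exists (g (b v)). apply hb.
        apply g_cont; auto.
      * unfold plus_fct, fct_cte, comp. pose proof (gpos (b v)). lra.
    + exists X. split; auto.
  - intros x3 [Hx0 Hx].
    set (M := 1 + 2 * l1 ^ 2 + l2 ^ 2).
    assert (HM : forall y, g y <= M) by (intros; apply g_bound; auto).
    assert (Hc : 0 < l1 * l2 * K \/ l1 * l2 * K < 0).
    { assert (0 < l1 * l2) by (destruct hl as [[? ?]|[-> ->]]; nra).
      destruct (Rtotal_order K 0) as [?|[?|?]]; [right; nra | contradiction | left; nra]. }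
    assert (HMp : 0 < l1 + M) by (pose proof (gpos 0); pose proof (HM 0); lra).
    split; [|split].
    + destruct Hc as [Hc|Hc].
      * apply (deriv_bij x3 (x3prime l1 l2 K b) (l1 * l2 * K / (l1 + M)) Hx).
        -- apply Rdiv_lt_0_compat; lra.
        -- intros x. rewrite x3eq. pose proof (gpos (b x)). pose proof (HM (b x)).
           unfold Rdiv. apply Rmult_le_compat_l; [lra|]. apply Rinv_le_contravar; lra.
      * destruct (deriv_bij (fun v => - x3 v) (fun v => - x3prime l1 l2 K b v)
                    (- (l1 * l2 * K) / (l1 + M))) as [I S].
        -- intros x. apply derivable_pt_lim_opp with (f := x3). apply Hx.
        -- apply Rdiv_lt_0_compat; lra.
        -- intros x. rewrite x3eq. pose proof (gpos (b x)). pose proof (HM (b x)).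
           unfold Rdiv. rewrite <- Ropp_mult_distr_l.
           apply Ropp_le_contravar. apply Rmult_le_compat_neg_l; [lra|].
           apply Rinv_le_contravar; lra.
        -- split.
           ++ intros u v E. apply I. rewrite E. reflexivity.
           ++ intros y. destruct (S (- y)) as [v Hv]. exists v. lra.
    + intros v.
      assert (D : forall x, derivable_pt_lim (fun v => x3 v - - x3 (- v)) x 0).
      { intros x. apply (dlim_ext _ (x3prime l1 l2 K b x - x3prime l1 l2 K b (- x))).
        - rewrite !x3eq, bodd. unfold g. rewrite g_even; auto. ring.
        - apply (dlim_minus x3 _ (fun v => - x3 (- v)) (fun x => x3prime l1 l2 K b (- x))); auto.
          apply (dlim_neg x3 _ Hx). }
      pose proof (deriv0_const _ D v) as E. simpl in E. rewrite Ropp_0, Hx0 in E. lra.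
    + intros v.
      assert (D : forall x, derivable_pt_lim (fun v => x3 (v + W) - x3 v) x 0).
      { intros x. apply (dlim_ext _ (x3prime l1 l2 K b (x + W) - x3prime l1 l2 K b x)).
        - rewrite !x3eq, bper. unfold g. rewrite g_per; auto. ring.
        - apply (dlim_minus (fun v => x3 (v + W)) (fun x => x3prime l1 l2 K b (x + W)) x3); auto.
          apply (dlim_shift x3 _ W Hx). }
      pose proof (deriv0_const _ D v) as E. simpl in E. rewrite Rplus_0_l, Hx0 in E. lra.
Qed.
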